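(* Let $D$ be a delta-matroid on $[n,\overline{n}]$. The collection of independent sets $I$ of $D$ with $a(I)=0$ is a simplicial complex on $[n,\overline{n}]$, i.e., it is closed under taking subsets.
   Context: For a finite $E\subseteq\{1,2,\dots\}$ let $E\cup\overline{E}$ consist of $E$ and formal copies $\overline{i}$ ($i\in E$), with involution $a\mapsto\overline{a}$; $\overline{S}=\{\overline{a}:a\in S\}$; $[n,\overline{n}]$ is the case $E=[n]$. A subset is admissible if it contains at most one of $i,\overline{i}$ for each $i$. In $\mathbb{R}^E$ set $e_{\overline{i}}=-e_i$, $e_S=\sum_{a\in S}e_a$. A delta-matroid on $E\cup\overline{E}$ is a nonempty collection $\mathcal{F}$ of admissible sets of size $|E|$ (feasible sets) such that $\operatorname{Conv}\{e_B:B\in\mathcal{F}\}$ has all edges parallel to some $e_i$ or $e_i\pm e_j$. An admissible $S$ is independent in $D$ if it is contained in a feasible set. For $A\subseteq[n]$, the projection $D(A)$ is the delta-matroid on $([n]\setminus A)\cup\overline{([n]\setminus A)}$ with feasible sets $B\setminus(A\cup\overline{A})$, $B\in\mathcal{F}$. For admissible $S$, $\underline{S}\subseteq[n]$ is its unsigned version (image under identifying $i$ with $\overline{i}$). Order $[n]$ by $1<2<\dots<n$. For a delta-matroid $D'$ on $E\cup\overline{E}$ and a feasible set $B$ of $D'$: $i\in E$ is $B$-orientable if $B\,\Delta\,\{i,\overline{i}\}$ is not feasible in $D'$; $i$ is $B$-active if it is $B$-orientable and there is no $j\in E$ with $j<i$ such that $B\,\Delta\,\{i,j,\overline{i},\overline{j}\}$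 is feasible in $D'$. For $I$ independent in $D$, $I$ is a feasible set of $D([n]\setminus\underline{I})$, and $i\in\underline{I}$ is $I$-active if it is $I$-active in $D([n]\setminus\underline{I})$; $a(I)$ is the number of $I$-active elements of $\underline{I}$. *)

(* Defs.v *)
From Stdlib Require Import Reals.
From mathcomp Require Import all_boot all_order all_algebra.
From mathcomp Require Import Rstruct.
Set Implicit Arguments. Unset Strict Implicit. Unset Printing Implicit Defensive.
Import Order.TTheory GRing.Theory Num.Theory.
Local Open Scope ring_scope.

(* Ground set [n, nbar]: (i, false) encodes the element i+1 of [n],
   (i, true) encodes its formal copy  bar(i+1).  The order 1<2<..<n on [n]
   is the order of 'I_n. *)
Definition elt (n : nat) := ('I_n * bool)%type.

Definition unsigned (n : nat) (S : {set elt n}) : {set 'I_n} := [set x.1 | x in S].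

Definition admissible (n : nat) (S : {set elt n}) : bool :=
  [forall i : 'I_n, ~~ (((i, false) \in S) && ((i, true) \in S))].

Definition evec (n : nat) (S : {set elt n}) (k : 'I_n) : R :=
  ((k, false) \in S)%:R - ((k, true) \in S)%:R.

Definition dotR (n : nat) (w v : 'I_n -> R) : R := \sum_(k < n) w k * v k.

Definition ebasis (n : nat) (i : 'I_n) (k : 'I_n) : R := (k == i)%:R.

Definition parallel_to_root (n : nat) (d : 'I_n -> R) : Prop :=
  exists c : R, c != 0 /\
  exists i j : 'I_n,
    (forall k, d k = c * ebasis i k) \/
    (forall k, d k = c * (ebasis i k + ebasis j k)) \/
    (forall k, d k = c * (ebasis i k - ebasis j k)).

(* [e_B1, e_B2] is an edge of Conv{e_B : B in F}: it is the face cut out by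
   some linear functional w, i.e. the maximizers of w over the points e_B
   (B in F) are exactly e_B1 and e_B2 (B1 <> B2). *)
Definition is_edge (n : nat) (F : {set {set elt n}}) (B1 B2 : {set elt n}) : Prop :=
  B1 \in F /\ B2 \in F /\ B1 != B2 /\
  exists w : 'I_n -> R,
    dotR w (evec B2) = dotR w (evec B1) /\
    forall B, B \in F ->
      dotR w (evec B) <= dotR w (evec B1) /\
      (dotR w (evec B) = dotR w (evec B1) -> B = B1 \/ B = B2).

Definition delta_matroid (n : nat) (F : {set {set elt n}}) : Prop :=
  F != set0 /\
  (forall B, B \in F -> admissible B /\ #|B| = n) /\
  (forall B1 B2, is_edge F B1 B2 -> parallel_to_root (fun k => evec B1 k - evec B2 k)).

Definition independent (n : nat) (F : {set {set elt n}}) (S : {set elt n}) : Prop :=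
  admissible S /\ exists2 B, B \in F & S \subset B.

Definition symdiff (T : finType) (A B : {set T}) : {set T} := (A :\: B) :|: (B :\: A).

(* S is feasible in the projection D([n] \ E), E a subset of [n]:
   feasible sets are B \ (A u bar A) with A = [n] \ E, B in F. *)
Definition proj_feasible (n : nat) (F : {set {set elt n}}) (E : {set 'I_n})
    (S : {set elt n}) : bool :=
  [exists B in F, S == B :&: [set x : elt n | x.1 \in E]].

Definition orientable (n : nat) (F : {set {set elt n}}) (E : {set 'I_n})
    (B : {set elt n}) (i : 'I_n) : bool :=
  ~~ proj_feasible F E (symdiff B [set (i, false); (i, true)]).

Definition active (n : nat) (F : {set {set elt n}}) (E : {set 'I_n})
    (B : {set elt n}) (i : 'I_n) : bool :=
  orientable F E B i &&
  ~~ [exists j : 'I_n, (j \in E) && (j < i)%N &&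
        proj_feasible F E (symdiff B [set (i, false); (j, false); (i, true); (j, true)])].

(* a(I): number of I-active elements of the unsigned version of I,
   activity being computed in D([n] \ unsigned I) *)
Definition num_active (n : nat) (F : {set {set elt n}}) (I : {set elt n}) : nat :=
  #|[set i in unsigned I | active F (unsigned I) I i]|.

(* Main.v *)
Require Import Defs.
From Stdlib Require Import Reals.
From mathcomp Require Import all_boot all_order all_algebra.
From mathcomp Require Import Rstruct.

Lemma symdiffI (T : finType) (A P S : {set T}) :
  symdiff A P :&: S = symdiff (A :&: S) (P :&: S).
Proof.
apply/setP=> x; rewrite /symdiff !inE.
by case: (x \in A); case: (x \in P); case: (x \in S).
Qed.

Lemma projL (n : nat) (F : {set {set elt n}}) (EI EJ : {set 'I_n})
  (I J Q : {set elt n}) :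
  EJ \subset EI -> J = I :&: [set x : elt n | x.1 \in EJ] ->
  proj_feasible F EI (symdiff I Q) ->
  proj_feasible F EJ (symdiff J (Q :&: [set x : elt n | x.1 \in EJ])).
Proof.
move=> sub hJ /existsP [B /andP [BF /eqP e]].
apply/existsP; exists B; rewrite BF /=; apply/eqP.
rewrite hJ -symdiffI e; apply/setP => x; rewrite !inE.
case h: (x.1 \in EJ); rewrite ?andbT ?andbF //.
by rewrite (subsetP sub _ h) andbT.
Qed.

Lemma J_eq (n : nat) (I J : {set elt n}) :
  admissible I -> J \subset I ->
  J = I :&: [set x : elt n | x.1 \in unsigned J].
Proof.
move=> adm JI; apply/setP => x; rewrite !inE; apply/idP/andP.
  move=> xJ; split; first exact: (subsetP JI).
  by apply/imsetP; exists x.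
case=> xI /imsetP [y yJ ey].
have yI := subsetP JI _ yJ.
move: x y xI yJ yI ey => [a b] [c d] xI yJ yI /= ey; subst c.
case: b d xI yJ yI => [] [] xI yJ yI //.
  by move/forallP: adm => /(_ a); rewrite xI yI.
by move/forallP: adm => /(_ a); rewrite xI yI.
Qed.

Theorem proposition3p9 (n : nat) (F : {set {set elt n}}) :
  delta_matroid F ->
  forall I J : {set elt n},
    independent F I -> num_active F I = 0%N ->
    J \subset I ->
    independent F J /\ num_active F J = 0%N.
Proof.
move=> _ I J [admI [B BF IB]] hI JI.
split.
  split; last by exists B => //; apply: subset_trans IB.
  apply/forallP => i; apply/negP => /andP [h1 h2].
  by move/forallP: admI => /(_ i); rewrite (subsetP JI _ h1) (subsetP JI _ h2).
have EJI : unsigned J \subset unsigned I by apply: imsetS.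
have hJ := @J_eq _ _ _ admI JI.
apply/eqP; rewrite cards_eq0; apply/eqP/setP => i; rewrite inE in_set0.
apply/negP => /andP [iEJ act].
move/eqP: hI; rewrite cards_eq0 => /eqP h0.
have : i \in (set0 : {set 'I_n}); last by rewrite in_set0.
rewrite -h0 inE (subsetP EJI _ iEJ) /=.
move: act; rewrite /active => /andP [or nj].
have PS : [set (i, false); (i, true)] :&: [set x : elt n | x.1 \in unsigned J]
          = [set (i, false); (i, true)].
  apply/setIidPl/subsetP => x; rewrite !inE => /orP [] /eqP -> /=; exact: iEJ.
apply/andP; split.
  apply/negP => pf; move/negP: or; apply.
  by have := @projL _ _ _ _ _ _ _ EJI hJ pf; rewrite PS.
apply/negP => /existsP [j /andP [/andP [jEI jlt] pf]].
have := @projL _ _ _ _ _ _ _ EJI hJ pf.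
case jEJ: (j \in unsigned J).
  rewrite (setIidPl _); last first.
    apply/subsetP => x; rewrite !inE => /orP [/orP [/orP []|]|] /eqP -> //=.
  move=> pf2; move/negP: nj; apply; apply/existsP; exists j.
  by rewrite jEJ jlt.
have -> : [set (i, false); (j, false); (i, true); (j, true)]
          :&: [set x : elt n | x.1 \in unsigned J] = [set (i, false); (i, true)].
  apply/setP => -[a b]; rewrite !inE /= !xpair_eqE.
  have [->|ai] := eqVneq a i.
    have ij : (i == j) = false by apply/eqP => e; rewrite e ltnn in jlt.
    by rewrite iEJ andbT ij; case: b.
  by case: (@eqP _ a j) => [->|_]; [rewrite jEJ andbF | ].


by move=> pf2; move/negP: or; apply.
Qed.
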